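(* Let $P$ be a finite poset and $\gamma\in\mathcal{U}_P^*$ with $\gamma\in(I^P_{\mathrm{comm}})^\perp$. Then $F_\gamma(\mathbf{x})$ is symmetric in $x_1,x_2,\dots$.
   Context: $\mathcal{U}_P=\mathbb{Z}\langle u_a:a\in P\rangle$ (noncommuting variables); $\mathcal{U}_P^*$ is the free $\mathbb{Z}$-module on words in the alphabet $P$, paired with $\mathcal{U}_P$ by $\langle \mathbf{u}_w, v\rangle=\delta_{vw}$ where $\mathbf{u}_w=u_{w_1}\cdots u_{w_n}$; for an ideal $I$, $I^\perp=\{\gamma:\langle z,\gamma\rangle=0\ \forall z\in I\}$. Write $a<_Pb$ for strict order. For $S\subseteq P$, $e^P_k(\mathbf{u}_S)=\sum u_{a_1}\cdots u_{a_k}$ over $a_1>_P\cdots>_Pa_k$ in $S$ ($e^P_0=1$, $e^P_k=0$ for $k<0$). $I^P_{\mathrm{comm}}$ is the ideal generated by $e^P_k(\mathbf{u}_S)e^P_\ell(\mathbf{u}_S)-e^P_\ell(\mathbf{u}_S)e^P_k(\mathbf{u}_S)$ over all $k,\ell$ and $S\subseteq P$. For a word $w$, $\mathrm{Des}_P(w)=\{i:w_{i+1}<_Pw_i\}$; $Q_D(\mathbf{x})=\sum x_{i_1}\cdots x_{i_n}$ over $i_1\le\cdots\le i_n$ with $i_j<i_{j+1}$ for $j\in D$. For $\gamma=\sum_w\gamma_w w$, $F_\gamma(\mathbf{x})=\sum_w\gamma_wQ_{\mathrm{Des}_P(w)}(\mathbf{x})$. *)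

(* Defs.v *)
From HB Require Import structures.
From mathcomp Require Import all_boot all_order all_algebra.
From mathcomp Require Import fingroup perm.
Set Implicit Arguments. Unset Strict Implicit. Unset Printing Implicit Defensive.
Import Order.TTheory GRing.Theory Num.Theory.
Local Open Scope ring_scope.

Section NCPoly.
Variables (d : Order.disp_t) (P : finPOrderType d).

(* Elements of U_P (and of U_P^* ) are represented as formal finite
   Z-linear combinations of words: lists of (coefficient, word). *)
Definition ncpoly := seq (int * seq P).

Definition pcoef (a : ncpoly) (w : seq P) : int := \sum_(p <- a | p.2 == w) p.1.

Definition pmul (x y : ncpoly) : ncpoly :=
  [seq (a.1 * b.1, a.2 ++ b.2) | a <- x, b <- y].

Definition pneg (x : ncpoly) : ncpoly := [seq (- a.1, a.2) | a <- x].

Definition pairing (z g : ncpoly) : int :=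
  \sum_(a <- z) \sum_(b <- g) a.1 * b.1 * (a.2 == b.2)%:R.

Inductive in_ideal (G : ncpoly -> Prop) : ncpoly -> Prop :=
| ideal_gen g : G g -> in_ideal G g
| ideal_zero : in_ideal G [::]
| ideal_add a b : in_ideal G a -> in_ideal G b -> in_ideal G (a ++ b)
| ideal_lmul x a : in_ideal G a -> in_ideal G (pmul x a)
| ideal_rmul a x : in_ideal G a -> in_ideal G (pmul a x)
| ideal_eq a b : in_ideal G a -> (forall w, pcoef a w = pcoef b w) ->
                 in_ideal G b.

Definition elemP (k : nat) (S : {set P}) : ncpoly :=
  map (fun t : k.-tuple P => (1%:Z, val t))
    (filter (fun t : k.-tuple P =>
       all (fun a => a \in S) t && sorted (fun a b => (b < a)%O) t)
       (enum {: k.-tuple P})).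

Definition Icomm_gen (z : ncpoly) : Prop :=
  exists (k l : nat) (S : {set P}),
    z = pmul (elemP k S) (elemP l S) ++ pneg (pmul (elemP l S) (elemP k S)).

Definition I_comm := in_ideal Icomm_gen.

Definition in_perp (I : ncpoly -> Prop) (g : ncpoly) : Prop :=
  forall z, I z -> pairing z g = 0.

(* 0-indexed descent: j (i.e. position j+1 in 1-indexed terms) is a descent
   of w iff w_{j+1} <_P w_j *)
Definition is_des (w : seq P) (j : nat) : bool :=
  if drop j w is a :: b :: _ then (b < a)%O else false.

(* Coefficient of the monomial x_1^{alpha 0} ... x_k^{alpha (k-1)} in
   Q_{Des_P(w)}(x): number of sequences i_1 <= ... <= i_n (n = |w|),
   strict at descents, with content alpha. Variables x_1..x_k are indexed
   by 'I_k (x_{m+1} <-> m). *)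
Definition Qcoef (w : seq P) (k : nat) (alpha : 'I_k -> nat) : nat :=
  #|[pred i : (size w).-tuple 'I_k |
      [forall j : 'I_(size w),
        (j.+1 < size w)%N ==>
          let a := nth 0%N (map val i) j in
          let b := nth 0%N (map val i) j.+1 in
          (a <= b)%N && (is_des w j ==> (a < b)%N)]
      && [forall m : 'I_k, count_mem m i == alpha m]]|.

(* coefficient of x_1^{alpha 0} ... x_k^{alpha (k-1)} in
   F_gamma = sum_w gamma_w Q_{Des_P(w)} *)
Definition Fcoef (g : ncpoly) (k : nat) (alpha : 'I_k -> nat) : int :=
  \sum_(p <- g) p.1 * (Qcoef p.2 alpha)%:Z.

(* F_gamma symmetric in x_1, x_2, ... : coefficients invariant under
   every permutation of variables (finitely supported permutations
   suffice, since each monomial involves finitely many variables) *)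
Definition F_symmetric (g : ncpoly) : Prop :=
  forall (k : nat) (alpha : 'I_k -> nat) (s : 'S_k),
    Fcoef g alpha = Fcoef g (fun m => alpha (s m)).

End NCPoly.

(* Main.v *)
Require Import Defs.
From HB Require Import structures.
From mathcomp Require Import all_boot all_order all_algebra.
From mathcomp Require Import fingroup perm.
From mathcomp Require Import finmap.
From mathcomp.multinomials Require Import monalg.
From mathcomp Require Import zify.
Set Implicit Arguments. Unset Strict Implicit. Unset Printing Implicit Defensive.
Import Order.TTheory GRing.Theory Num.Theory.
Local Open Scope ring_scope.
Lemma comm_id (R : pzRingType) (X Y Z : R) :
  X * (Y * Z) - Y * Z * X = (X * Y - Y * X) * Z + Y * (X * Z - Z * X).
Proof. by rewrite mulrBl mulrBr !mulrA addrA subrK. Qed.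
Lemma perm_id (R : pzRingType) (h p1 p23 p2 p3 : R) : p23 = p2 * p3 ->
  h * p1 - p2 * (h * p3) = h * (p1 - p23) + (h * p2 - p2 * h) * p3.
Proof. by move=> ->; rewrite mulrBr mulrBl !mulrA addrA subrK. Qed.
Lemma sum_id (R : pzRingType) X (I : Type) (r : seq I) (Q : pred I) (F : I -> R) :
  X * (\sum_(i <- r | Q i) F i) - (\sum_(i <- r | Q i) F i) * X =
  \sum_(i <- r | Q i) (X * F i - F i * X).
Proof. by rewrite mulr_sumr mulr_suml -sumrB. Qed.
Lemma mz_id (R : pzRingType) (c : int) (X Y : R) :
  X * (Y *~ c) - (Y *~ c) * X = (X * Y - Y * X) *~ c.
Proof. by rewrite mulrzAl mulrzAr mulrzBl. Qed.

Section S.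
Variables (d : Order.disp_t) (P : finPOrderType d).
Local Notation A := {malg int[fmonom P]}.

Definition co (X : A) (w : seq P) : int := X@_(FMonom w).

Lemma coP (X Y : A) : (forall w, co X w = co Y w) -> X = Y.
Proof. by move=> h; apply/malgP => k; rewrite -[k]fmK; exact: h. Qed.

Lemma coD X Y w : co (X + Y) w = co X w + co Y w.
Proof. exact: mcoeffD. Qed.
Lemma coN X w : co (- X) w = - co X w.
Proof. exact: mcoeffN. Qed.
Lemma coB X Y w : co (X - Y) w = co X w - co Y w.
Proof. exact: mcoeffB. Qed.
Lemma co0 w : co 0 w = 0.
Proof. exact: mcoeff0. Qed.
Lemma coZ c X w : co (c *: X) w = c * co X w.
Proof. exact: mcoeffZ. Qed.
Lemma co_sum (I : Type) (r : seq I) (Q : pred I) (F : I -> A) w :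
  co (\sum_(i <- r | Q i) F i) w = \sum_(i <- r | Q i) co (F i) w.
Proof. by rewrite /co raddf_sum. Qed.
Lemma coU c s w : co << c *g FMonom s >> w = c *+ (s == w).
Proof. by rewrite /co mcoeffU fmP. Qed.
Lemma co1 w : co 1 w = (w == [::])%:R.
Proof. by rewrite /co mcoeff1 fmP fm1. Qed.

Lemma catE (s1 s2 w : seq P) : ((s1 ++ s2 == w) : nat) =
  (\sum_(j < (size w).+1) ((s1 == take j w) && (s2 == drop j w) : nat))%N.
Proof.
case: eqP => [hw|hne]; last first.
  rewrite big1 // => j _; apply/eqP; rewrite eqb0; apply/negP => /andP[/eqP h1 /eqP h2].
  by apply: hne; rewrite h1 h2 cat_take_drop.
have hs : (size s1 < (size w).+1)%N by rewrite -hw ltnS size_cat leq_addr.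
have t1 : take (size s1) w = s1 by rewrite -hw take_size_cat.
have d1 : drop (size s1) w = s2 by rewrite -hw drop_size_cat.
rewrite (bigD1 (Ordinal hs)) //= t1 d1 !eqxx /=.
rewrite big1 // => j hj; apply/eqP; rewrite eqb0; apply/negP => /andP[/eqP h1 _].
move: hj; rewrite -val_eqE /=.
have -> : size s1 = j by rewrite h1 size_takel // -ltnS.
by rewrite eqxx.
Qed.

Lemma supp_sum (X : A) (F : int -> int) (m : fmonom P) : F 0 = 0 ->
  \sum_(k <- msupp X) F (X@_k) *+ (k == m) = F (X@_m).
Proof.
move=> F0; case: (boolP (m \in msupp X)) => hm.
  rewrite (big_fsetD1 m) //= eqxx mulr1n big_seq big1 ?addr0 // => k.
  by rewrite in_fsetD1 => /andP[/negPf -> _].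
rewrite mcoeff_outdom // F0 big_seq big1 // => k hk.
by case: eqP hk hm => [->->|].
Qed.

Lemma coM (X Y : A) w :
  co (X * Y) w = \sum_(j < (size w).+1) co X (take j w) * co Y (drop j w).
Proof.
rewrite /co mcoeffMl.
under eq_bigr => k1 _ do under eq_bigr => k2 _ do
  rewrite fmP fmM /= catE -sumrMnr.
rewrite (eq_bigr (fun k1 => \sum_(j < (size w).+1) \sum_(k2 <- msupp Y)
   (X@_k1 * Y@_k2) *+ ((k1 == FMonom (take j w)) && (k2 == FMonom (drop j w))))); last first.
  by move=> k1 _; rewrite exchange_big.
rewrite exchange_big /=; apply: eq_bigr => j _.
under eq_bigr => k1 _ do under eq_bigr => k2 _ do rewrite -mulnb.
rewrite (eq_bigr (fun k1 => (\sum_(k2 <- msupp Y) (X@_k1 * Y@_k2) *+ (k2 == FMonom (drop j w))) *+ (k1 == FMonom (take j w)))); last first.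
  move=> k1 _; rewrite -sumrMnl; apply: eq_bigr => k2 _; by rewrite -mulrnA mulnC mulrnA.

under eq_bigr => k1 _ do rewrite (@supp_sum Y (fun y => X@_k1 * y)) ?mulr0 //.
by rewrite (@supp_sum X (fun x => x * Y@_(FMonom (drop j w)))) ?mul0r.
Qed.

Definition toA (z : ncpoly P) : A := \sum_(a <- z) << a.1 *g FMonom a.2 >>.

Lemma co_toA z w : co (toA z) w = pcoef z w.
Proof.
rewrite co_sum /pcoef [RHS]big_mkcond /=; apply: eq_bigr => a _; rewrite coU.
by case: (a.2 == w).
Qed.

Lemma toA_cat x y : toA (x ++ y) = toA x + toA y.
Proof. by rewrite /toA big_cat. Qed.

Lemma toA_pneg x : toA (pneg x) = - toA x.
Proof.
rewrite /toA /pneg big_map -sumrN; apply: eq_bigr => a _ /=.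
by rewrite monalgUN.
Qed.

Lemma toA_pmul x y : toA (pmul x y) = toA x * toA y.
Proof.
rewrite /toA /pmul big_allpairs_dep mulr_suml; apply: eq_bigr => a _.
rewrite mulr_sumr; apply: eq_bigr => b _.
by rewrite malgM_def fgmulUU /= /mmul /= fmmulE.
Qed.

Lemma toA_surj (X : A) : exists z, toA z = X.
Proof.
exists [seq (X@_k, val k) | k <- msupp X].
rewrite /toA big_map [RHS]monalgE; apply: eq_bigr => k _ /=.
by rewrite fmK.
Qed.

Definition J (X : A) := exists z, I_comm z /\ toA z = X.

Lemma J0 : J 0.
Proof. by exists [::]; split; [exact: ideal_zero | rewrite /toA big_nil]. Qed.

Lemma JD X Y : J X -> J Y -> J (X + Y).
Proof.
move=> [x [hx <-]] [y [hy <-]]; exists (x ++ y); split; last exact: toA_cat.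
exact: ideal_add.
Qed.

Lemma JMl M X : J X -> J (M * X).
Proof.
move=> [x [hx <-]]; have [m <-] := toA_surj M.
exists (pmul m x); split; last exact: toA_pmul.
exact: ideal_lmul.
Qed.

Lemma JMr M X : J X -> J (X * M).
Proof.
move=> [x [hx <-]]; have [m <-] := toA_surj M.
exists (pmul x m); split; last exact: toA_pmul.
exact: ideal_rmul.
Qed.

Lemma JN X : J X -> J (- X).
Proof. by move=> h; rewrite -mulN1r; apply: JMl. Qed.

Lemma JB X Y : J X -> J Y -> J (X - Y).
Proof. by move=> hx hy; apply: JD => //; apply: JN. Qed.

Lemma JZ (c : int) X : J X -> J (c *: X).
Proof. by move=> h; rewrite -mul_malgC; apply: JMl. Qed.

Lemma J_sum (I : Type) (r : seq I) (Q : pred I) (F : I -> A) :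
  (forall i, Q i -> J (F i)) -> J (\sum_(i <- r | Q i) F i).
Proof. by move=> h; apply: big_ind => //; [exact: J0 | exact: JD]. Qed.

Definition phi (g : ncpoly P) (X : A) : int := \sum_(b <- g) b.1 * co X b.2.

Lemma phiB g X Y : phi g (X - Y) = phi g X - phi g Y.
Proof.
by rewrite /phi -sumrB; apply: eq_bigr => b _; rewrite coB mulrBr.
Qed.

Lemma phi_toA g z : phi g (toA z) = pairing z g.
Proof.
rewrite /phi /pairing exchange_big /=; apply: eq_bigr => b _.
rewrite co_toA /pcoef mulr_sumr big_mkcond /=; apply: eq_bigr => a _.
by case: eqP => _; rewrite ?mulr1 ?mulr0 // mulrC.
Qed.

Lemma phi_J g X : in_perp (@I_comm d P) g -> J X -> phi g X = 0.
Proof. by move=> hg [z [hz <-]]; rewrite phi_toA; apply: hg. Qed.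

Definition tl (k : nat) (cw : pred (seq P)) : ncpoly P :=
  map (fun t : k.-tuple P => (1%:Z, val t))
    (filter (fun t : k.-tuple P => cw (val t)) (enum {: k.-tuple P})).

Lemma pcoef_tl k cw w : pcoef (tl k cw) w = ((size w == k) && cw w)%:R.
Proof.
rewrite /pcoef /tl big_map big_filter_cond /= big_enum_cond /=.
case: eqP => [hs|hs]; last first.
  by rewrite big_pred0 // => t; apply/negP => /andP[_ /eqP ht]; apply: hs; rewrite -ht size_tuple.
have t0 := @Tuple k P w (introT eqP hs).
case hc: (cw w) => /=.
  rewrite (big_pred1 (@Tuple k P w (introT eqP hs))) // => t /=.
  rewrite -val_eqE /=; case: eqP => [->|]; by rewrite ?hc ?andbF.
by rewrite big_pred0 // => t /=; case: eqP => [->|]; rewrite ?hc ?andbF.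
Qed.

Definition dec (s : seq P) := sorted (fun a b => (b < a)%O) s.
Definition nd (s : seq P) := sorted (fun a b => ~~ (b < a)%O) s.

Definition E k : A := toA (elemP k [set: P]).
Definition H n : A := toA (tl n nd).

Lemma coE k w : co (E k) w = ((size w == k) && dec w)%:R.
Proof.
rewrite /E co_toA.
have -> : elemP k [set: P] = tl k (fun s => all (fun a => a \in [set: P]) s && dec s) by [].
rewrite pcoef_tl; congr (_ %:R); congr (_ && _).
by rewrite (@eq_all _ _ predT) ?all_predT // => a; rewrite in_setT.
Qed.

Lemma coH n w : co (H n) w = ((size w == n) && nd w)%:R.
Proof. by rewrite /H co_toA pcoef_tl. Qed.

Lemma coM_hom (X Y : A) k w : (forall u, size u != k -> co X u = 0) ->
  co (X * Y) w = if (k <= size w)%N then co X (take k w) * co Y (drop k w) else 0.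
Proof.
move=> hX; rewrite coM; case: ifP => hk.
  have hk' : (k < (size w).+1)%N by rewrite ltnS.
  rewrite (bigD1 (Ordinal hk')) //= big1 ?addr0 // => j hj.
  rewrite hX ?mul0r // size_takel; last by rewrite -ltnS.
  by move: hj; rewrite -val_eqE.
rewrite big1 // => j _; rewrite hX ?mul0r // size_takel; last by rewrite -ltnS.
by apply/eqP => hjk; move: (ltn_ord j); rewrite hjk ltnS hk.
Qed.

Lemma coEM k Y w : co (E k * Y) w =
  if (k <= size w)%N then (dec (take k w))%:R * co Y (drop k w) else 0.
Proof.
rewrite (@coM_hom _ _ k) => [|u hu]; last by rewrite coE (negPf hu).
by case: ifP => // hk; rewrite coE size_takel // eqxx.
Qed.

Lemma coHM k Y w : co (H k * Y) w =
  if (k <= size w)%N then (nd (take k w))%:R * co Y (drop k w) else 0.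
Proof.
rewrite (@coM_hom _ _ k) => [|u hu]; last by rewrite coH (negPf hu).
by case: ifP => // hk; rewrite coH size_takel // eqxx.
Qed.

Lemma alt_sum (w : seq P) : w != [::] ->
  \sum_(k < (size w).+1) ((-1) ^+ k : int) *+ (dec (take k w) && nd (drop k w)) = 0.
Proof.
elim: w => // a w IH _.
case: w IH => [|b w'] IH.
  by rewrite !big_ord_recl big_ord0 /=.
have {}IH := IH isT.
set w := b :: w' in IH *.
rewrite big_ord_recl take0 drop0 expr0 in IH.
have e0 : dec [::] = true by [].
rewrite e0 in IH.
rewrite (eq_bigr (fun i : 'I_(size w) => (-1)^+ i.+1 *+ (dec (take i.+1 w) && nd (drop i.+1 w)))) in IH; last by move=> i; rewrite lift0.
rewrite big_ord_recl take0 drop0 expr0.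
rewrite (eq_bigr (fun i : 'I_(size w).+1 => (-1)^+ i.+1 *+ (dec (take i.+1 (a :: w)) && nd (drop i.+1 (a :: w))))); last by move=> i; rewrite lift0.
rewrite big_ord_recl expr1.
rewrite (eq_bigr (fun i : 'I_(size w) => (-1)^+ i.+2 *+ (dec (take i.+2 (a :: w)) && nd (drop i.+2 (a :: w))))); last by move=> i; rewrite lift0.
have e1 : dec [:: a] = true by [].
have e2 : nd (a :: w) = ~~ (b < a)%O && nd w by [].
have e3 : forall i : 'I_(size w), dec (take i.+2 (a :: w)) = (b < a)%O && dec (take i.+1 w).
  by move=> i.
rewrite e0 e2 -[X in -1 *+ X]/(nat_of_bool (nd w)).
under eq_bigr => i _ do rewrite e3.
have hX : forall c : bool, \sum_(i < size w) (-1 : int)^+ i.+2 *+ ((c && dec (take i.+1 w)) && nd (drop i.+2 (a :: w))) = - (c%:R * \sum_(i < size w) (-1) ^+ i.+1 *+ (dec (take i.+1 w) && nd (drop i.+1 w))).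
  move=> c; case: c.
    rewrite /= mul1r -sumrN; apply: eq_bigr => i _.
    by rewrite exprS mulN1r mulNrn.
  by rewrite /= mulr0n mul0r oppr0 big1 // => i _; rewrite mulr0n.
rewrite hX mulNrn; move: IH; rewrite andTb.
case: (b < a)%O; rewrite /= ?mul1r ?mul0r ?oppr0 ?addr0 ?add0r.
  by rewrite -opprD => ->; rewrite oppr0.
by rewrite subrr.
Qed.

Lemma H0 : H 0 = 1.
Proof.
apply: coP => w; rewrite coH co1 size_eq0.
by case: w.
Qed.

Lemma coMz X (c : int) w : co (X *~ c) w = c * co X w.
Proof. by rewrite /co raddfMz -mulrzr intz mulrC. Qed.

Lemma H_rec n : H n.+1 = \sum_(k < n.+1) (E k.+1 * H (n - k)) *~ ((-1)^+k).
Proof.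
apply: coP => w; rewrite coH co_sum.
under eq_bigr => i _ do rewrite coMz coEM coH size_drop.
case: (eqVneq (size w) n.+1) => hs /=; last first.
  rewrite big1 // => i _; case: ifP => hi; last by rewrite mulr0.
  rewrite (_ : (size w - i.+1 == n - i)%N = false) ?mulr0 //.
  apply/negbTE; apply: contra hs => /eqP h; apply/eqP.
  have := ltn_ord i; lia.
have hw : w != [::] by rewrite -size_eq0 hs.
have := alt_sum hw; rewrite big_ord_recl take0 drop0 expr0.
rewrite (eq_bigr (fun i : 'I_(size w) => (fun i : nat => - ((-1)^+ i *+ (dec (take i.+1 w) && nd (drop i.+1 w)))) i)); last first.
  by move=> i _; rewrite lift0 exprS mulN1r mulNrn.
rewrite -(big_mkord xpredT (fun i : nat => - ((-1)^+ i *+ (dec (take i.+1 w) && nd (drop i.+1 w))))) hs big_mkord.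
rewrite sumrN => /eqP; rewrite subr_eq0 => /eqP ->.
apply: eq_bigr => i _; rewrite (ltn_ord i).
rewrite (_ : (n.+1 - i.+1 == n - i)%N) //= -natrM mulnb.
by rewrite -mulr_natr.
Qed.
Definition Cm (X Y : A) := J (X * Y - Y * X).

Lemma Cm_sym X Y : Cm X Y -> Cm Y X.
Proof. by move=> h; rewrite /Cm -opprB; apply: JN. Qed.

Lemma Cm_mulr X Y Z : Cm X Y -> Cm X Z -> Cm X (Y * Z).
Proof.
move=> h1 h2; rewrite /Cm.
have -> : X * (Y * Z) - Y * Z * X = (X * Y - Y * X) * Z + Y * (X * Z - Z * X).
  exact: comm_id.
exact: (JD (JMr Z h1) (JMl Y h2)).
Qed.

Lemma Cm_sum X (I : Type) (r : seq I) (Q : pred I) (F : I -> A) :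
  (forall i, Q i -> Cm X (F i)) -> Cm X (\sum_(i <- r | Q i) F i).
Proof.
move=> h; rewrite /Cm sum_id; exact: J_sum.
Qed.

Lemma Cm_Z X Y (c : int) : Cm X Y -> Cm X (Y *~ c).
Proof.
by move=> h; rewrite /Cm mz_id -mulrzr; apply: JMr.
Qed.

Lemma Cm_1 X : Cm X 1.
Proof. by rewrite /Cm mulr1 mul1r subrr; exact: J0. Qed.

Lemma EE k l : Cm (E k) (E l).
Proof.
exists (pmul (elemP k [set: P]) (elemP l [set: P]) ++
        pneg (pmul (elemP l [set: P]) (elemP k [set: P]))).
split; last by rewrite toA_cat toA_pneg !toA_pmul.
by apply: ideal_gen; exists k, l, [set: P].
Qed.

Lemma EH k n : Cm (E k) (H n).
Proof.
elim: n {-2}n (leqnn n) k => [|N IH] n hn k.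
  by move: hn; rewrite leqn0 => /eqP ->; rewrite H0; exact: Cm_1.
case: n hn => [|n] hn; first by rewrite H0; exact: Cm_1.
rewrite H_rec; apply: Cm_sum => i _; apply: Cm_Z; apply: Cm_mulr; first exact: EE.
by apply: IH; rewrite leq_subLR; move: hn; rewrite ltnS => /leq_trans; apply; exact: leq_addl.
Qed.

Lemma HH m n : Cm (H m) (H n).
Proof.
elim: m {-2}m (leqnn m) n => [|N IH] m hm n.
  by move: hm; rewrite leqn0 => /eqP ->; rewrite H0; apply: Cm_sym; exact: Cm_1.
case: m hm => [|m] hm; first by rewrite H0; apply: Cm_sym; exact: Cm_1.
apply: Cm_sym; rewrite H_rec; apply: Cm_sum => i _; apply: Cm_Z; apply: Cm_mulr.
  by apply: Cm_sym; exact: EH.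
by apply: Cm_sym; apply: IH; rewrite leq_subLR; move: hm; rewrite ltnS => /leq_trans; apply; exact: leq_addl.
Qed.

Lemma Cm_prod a l : Cm (H a) (\prod_(x <- l) H x).
Proof.
elim: l => [|x l IH]; first by rewrite big_nil; exact: Cm_1.
by rewrite big_cons; exact: (Cm_mulr (HH a x) IH).
Qed.

Lemma perm_prod l l' : perm_eq l l' ->
  J (\prod_(x <- l) H x - \prod_(x <- l') H x).
Proof.
elim: l l' => [|x l1 IH] l' hp.
  by move: (perm_size hp) => /= /esym /size0nil ->; rewrite subrr; exact: J0.
have hx : x \in l' by rewrite -(perm_mem hp) mem_head.
move: hp; case/splitPr: hx => l2 l3 hp.
have hq : perm_eq (l2 ++ x :: l3) (x :: (l2 ++ l3)).
  by rewrite -cat_rcons -cat_cons perm_cat2r perm_rcons.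
have {hq} := perm_trans hp hq; rewrite perm_cons => {}hp.
have -> : \prod_(y <- x :: l1) H y - \prod_(y <- l2 ++ x :: l3) H y =
  H x * (\prod_(y <- l1) H y - \prod_(y <- l2 ++ l3) H y) +
  (H x * \prod_(y <- l2) H y - \prod_(y <- l2) H y * H x) * \prod_(y <- l3) H y.
  by rewrite big_cons !big_cat big_cons; apply: perm_id.
by apply: JD; [apply: JMl; exact: IH | apply: JMr; exact: Cm_prod].
Qed.

Fixpoint G (w : seq P) (l : seq nat) : bool :=
  if l is a :: l' then [&& (a <= size w)%N, nd (take a w) & G (drop a w) l']
  else w == [::].

Lemma co_prodH l w : co (\prod_(x <- l) H x) w = (G w l)%:R.
Proof.
elim: l w => [|a l IH] w; first by rewrite big_nil co1.
rewrite big_cons coHM /=; case: ifP => ha //=.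
by rewrite IH -natrM mulnb.
Qed.

Definition Rz : rel (P * nat) :=
  fun p q => (p.2 <= q.2)%N && ((q.1 < p.1)%O ==> (p.2 < q.2)%N).

Lemma is_desE (w : seq P) (p : P) j : (j.+1 < size w)%N ->
  is_des w j = (nth p w j.+1 < nth p w j)%O.
Proof.
move=> h; rewrite /is_des (drop_nth p) ?(ltn_trans (ltnSn j) h) //.
by rewrite (drop_nth p).
Qed.

Lemma C1E (w : seq P) (x : seq nat) : size x = size w ->
  [forall j : 'I_(size w), (j.+1 < size w)%N ==>
     (let a := nth 0%N x j in let b := nth 0%N x j.+1 in
      (a <= b)%N && (is_des w j ==> (a < b)%N))] = sorted Rz (zip w x).
Proof.
case: w => [|p w'] hs.
  by rewrite (size0nil hs); apply/forallP => -[].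
apply/forallP/(sortedP (p, 0%N)) => h.
  move=> i; rewrite size_zip hs minnn => hi.
  have := h (Ordinal (ltn_trans (ltnSn i) hi)); move/implyP/(_ hi).
  by rewrite !nth_zip ?hs // (is_desE p hi).
move=> j; apply/implyP => hj.
have := h j; rewrite size_zip hs minnn => /(_ hj).
by rewrite !nth_zip ?hs // (is_desE p hj).
Qed.

Lemma mem_zip2 (s : seq P) (t : seq nat) p : p \in zip s t -> p.2 \in t.
Proof.
elim: s t => [|a s IH] [|b t] //=; rewrite !in_cons => /orP[/eqP -> | /IH ->].
  by rewrite eqxx.
by rewrite orbT.
Qed.

Lemma sorted_cat_rel (T : eqType) (e : rel T) s1 s2 :
  (forall p q, p \in s1 -> q \in s2 -> e p q) ->
  sorted e (s1 ++ s2) = sorted e s1 && sorted e s2.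
Proof.
case: s1 => [|p s1] //= h.
rewrite cat_path; case: s2 h => [|q s2] h /=; first by rewrite andbT.
by rewrite h ?mem_last ?mem_head.
Qed.

Lemma path_nseq (T : Type) (e : rel T) x n : e x x -> path e x (nseq n x).
Proof. by move=> hx; elim: n => //= n ->; rewrite hx. Qed.

Lemma zip_nseq (u : seq P) (y : nat) :
  zip u (nseq (size u) y) = map (fun b => (b, y)) u.
Proof. by elim: u => //= b u ->. Qed.

Lemma sorted_const (u : seq P) (y : nat) :
  sorted Rz (zip u (nseq (size u) y)) = nd u.
Proof.
rewrite zip_nseq sorted_map; apply: eq_sorted => a b /=.
by rewrite /Rz /= leqnn ltnn implybF.
Qed.

Section KEY.
Variables (k : nat) (al : 'I_k -> nat).
Definition cc (ms : seq 'I_k) : seq 'I_k := flatten [seq nseq (al m) m | m <- ms].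

Lemma mem_cc ms m : m \in cc ms -> m \in ms.
Proof. by move=> /flattenP[s /mapP[m' hm' ->]] /nseqP[-> _]. Qed.

Let ltI := fun a b : 'I_k => (a < b)%N.
Let leI := fun a b : 'I_k => (a <= b)%N.
Let ltI_trans : transitive ltI.
Proof. by move=> a b c; apply: ltn_trans. Qed.

Lemma sorted_cc ms : sorted ltI ms -> sorted leI (cc ms).
Proof.
elim: ms => [|m ms IH] //= hs.
have hs' := path_sorted hs.
have hall := order_path_min ltI_trans hs.
rewrite sorted_cat_rel; last first.
  move=> p q /nseqP[-> _] /mem_cc hq; apply: ltnW.
  exact: (allP hall).
rewrite IH // andbT.
by case: (al m) => //= n; apply: path_nseq; exact: leqnn.
Qed.

Lemma stepC ms w : sorted ltI ms ->
  ((size (cc ms) == size w) && sorted Rz (zip w (map val (cc ms)))) = G w (map al ms).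
Proof.
elim: ms w => [|m ms IH] w hs.
  by rewrite /= eq_sym size_eq0; case: w.
have hs' := path_sorted hs.
have hall := order_path_min ltI_trans hs.
rewrite /cc /= -/(cc ms) map_cat size_cat size_nseq.
case: (leqP (al m) (size w)) => ha; last first.
  rewrite (_ : (al m + size (cc ms) == size w) = false) //.
  apply/negbTE; rewrite neq_ltn; apply/orP; right.
  exact: (leq_trans ha (leq_addr _ _)).
rewrite -[in zip w _](cat_take_drop (al m) w) zip_cat; last first.
  by rewrite size_map size_nseq size_takel.
rewrite map_nseq sorted_cat_rel; last first.
  move=> p q /mem_zip2 /nseqP[hp _] /mem_zip2 /mapP[m' /mem_cc hm' hq].
  have := allP hall m' hm'; rewrite /ltI /Rz hp hq => h.
  by rewrite (ltnW h) h implybT.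
rewrite -[X in nseq X](size_takel ha) sorted_const.
rewrite -IH // size_drop /=.
have -> : ((al m + size (cc ms))%N == size w) = (size (cc ms) == (size w - al m)%N).
  by rewrite -{1}(subnK ha) addnC eqn_add2r.
by case: (size (cc ms) == _); case: nd.
Qed.


Lemma count_cc m : count_mem m (cc (enum 'I_k)) = al m.
Proof.
rewrite /cc count_flatten -map_comp sumnE big_map big_enum /=.
rewrite (bigD1 m) //= count_nseq /= eqxx mul1n big1 ?addn0 // => m' hm'.
by rewrite count_nseq /= (negbTE hm').
Qed.

Lemma sorted_enumI : sorted ltI (enum 'I_k).
Proof. by have := iota_ltn_sorted 0 k; rewrite -val_enum_ord sorted_map. Qed.

Lemma Qcoef_G w : Qcoef w al = G w (map al (enum 'I_k)).
Proof.
set c := cc (enum 'I_k).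
have hC := stepC w sorted_enumI; rewrite -/c in hC.
rewrite /Qcoef.
rewrite (@eq_card _ _ [pred i : (size w).-tuple 'I_k | (val i == c) && G w (map al (enum 'I_k))]); last first.
  move=> i; rewrite !inE C1E; last by rewrite size_map size_tuple.
  apply/idP/idP.
    case/andP=> h1 /forallP h2.
    have hperm : perm_eq (val i) c.
      by apply/allP => m _ /=; rewrite count_cc (eqP (h2 m)).
    have hsi : sorted leI (val i).
      have : sorted (relpre snd leq) (zip w (map val i)).
        by apply: sub_sorted h1 => p q /andP[].
      move=> h.
      have e : map snd (zip w (map val i)) = map val i.
        by apply: unzip2_zip; rewrite size_map size_tuple.
      have h3 : sorted leq (map val i) by rewrite -e sorted_map.
      by rewrite sorted_map in h3.
    have hvi : val i = c.
      apply: (sorted_eq (leT := leI)) => //.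
      - by move=> a b c'; apply: leq_trans.
      - by move=> a b /anti_leq /val_inj.
      - exact: (sorted_cc sorted_enumI).
    rewrite hvi eqxx /= -hC -hvi size_tuple eqxx /=.
    exact: h1.
  case/andP=> /eqP hvi hG; rewrite hvi; rewrite -hC in hG.
  case/andP: hG => _ ->; apply/forallP => m.
  by rewrite count_cc.
case hG: (G w (map al (enum 'I_k))); last first.
  by rewrite eq_card0 // => i; rewrite !inE andbF.
have hs : size c == size w by move: hG; rewrite -hC => /andP[].
apply: (@eq_card1 _ (@Tuple _ _ c hs)) => i.
by rewrite !inE andbT -val_eqE.
Qed.
End KEY.
End S.

Unset Implicit Arguments. Set Strict Implicit. Set Printing Implicit Defensive.
Local Close Scope ring_scope.

Theorem mainTheorem4 (d : Order.disp_t) (P : finPOrderType d)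
  (gamma : ncpoly P) :
  in_perp (@I_comm d P) gamma -> F_symmetric gamma.
Proof.
move=> hg k al s.
have key : forall (al' : 'I_k -> nat),
    Fcoef gamma al' = phi gamma (\prod_(x <- map al' (enum 'I_k)) H P x).
  move=> al'; rewrite /Fcoef /phi; apply: eq_bigr => b _.
  by rewrite co_prodH -Qcoef_G natz.
rewrite !key; apply/eqP; rewrite -subr_eq0 -phiB; apply/eqP.
apply: phi_J => //; apply: perm_prod.
rewrite (map_comp al s); apply: perm_map.
apply: uniq_perm; first exact: enum_uniq.
  by rewrite map_inj_uniq ?enum_uniq //; exact: perm_inj.
move=> x; rewrite mem_enum; apply/esym/mapP; exists (s^-1 x)%g.
  by rewrite mem_enum.
by rewrite permKV.
Qed.
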